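(* Let $M>0$ and let $(q(t),p(t))$ with $q(t)>0$ be a solution of Hamilton's equations $\dot q=\partial\mathcal H/\partial p$, $\dot p=-\partial\mathcal H/\partial q$ for the single rotating circular peakon Hamiltonian $\mathcal H(p,q)=\frac12\big(p^2+\frac{M^2}{q^2}\big)G(q,q)$, and let $E=\big(p^2+\frac{M^2}{q^2}\big)G(q,q)>0$ be its (conserved) value along the solution. Then there is a unique $q_*=q_*(M,E)>0$ satisfying $$q_*=M\sqrt{\frac{G(q_*,q_* )}{E}},$$ and $q(t)\ge q_*$ for all $t$ in the interval of existence; in particular the peakon circle never collapses to the origin.
   Context: $G(q,q)=I_1(q)K_1(q)$, where $I_1,K_1$ are the modified Bessel functions of order one; more generally $G(r,\xi)=I_1(\min(r,\xi))K_1(\max(r,\xi))$ is the Green's function of the radial Helmholtz operator $1-\frac1r\partial_r r\partial_r+\frac1{r^2}$. *)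

(* Defs.v *)
From Stdlib Require Import Reals Lra Factorial.
From Coquelicot Require Import Coquelicot.
Open Scope R_scope.

Definition BesselI1 (x : R) : R :=
  Series (fun k => (x / 2) ^ (2 * k + 1) / (INR (fact k) * INR (fact (S k)))).

Definition BesselK1 (x : R) : R :=
  RInt_gen (fun t => exp (- x * cosh t) * cosh t)
           (at_point 0) (Rbar_locally p_infty).

(* Green's function of the radial Helmholtz operator. *)
Definition G (r xi : R) : R := BesselI1 (Rmin r xi) * BesselK1 (Rmax r xi).

Definition Hpeak (M p q : R) : R := / 2 * (p ^ 2 + M ^ 2 / q ^ 2) * G q q.

(* Main.v *)
Require Import Defs.
From Stdlib Require Import Reals Lra Lia Factorial.
From Coquelicot Require Import Coquelicot.
Open Scope R_scope.

Lemma F_mono (f : R -> R) : (forall t, continuous f t) -> (forall t, 0 <= t -> 0 <= f t) ->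
  forall b0 b, 0 <= b0 <= b -> RInt f 0 b0 <= RInt f 0 b.
Proof.
intros Hc Hp b0 b Hb.
assert (Hex : forall u v, ex_RInt f u v) by (intros; apply (@ex_RInt_continuous R_CompleteNormedModule); auto).
rewrite <- (RInt_Chasles f 0 b0 b) by auto.
assert (0 <= RInt f b0 b). { apply RInt_ge_0; try lra; auto. intros; apply Hp; lra. }
unfold plus; simpl; lra.
Qed.

Lemma mono_lim (f : R -> R) (B : R) :
  (forall t, continuous f t) -> (forall t, 0 <= t -> 0 <= f t) ->
  (forall b, 0 <= b -> RInt f 0 b <= B) ->
  exists l, is_RInt_gen f (at_point 0) (Rbar_locally p_infty) l /\
     forall b, 0 <= b -> RInt f 0 b <= l.
Proof.
intros Hc Hp HB.
set (E := fun y => exists b, 0 <= b /\ y = RInt f 0 b).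
assert (HE1 : bound E). { exists B. intros y [b [Hb ->]]. auto. }
assert (HE2 : exists y, E y). { exists (RInt f 0 0). exists 0. split; auto; lra. }
destruct (completeness E HE1 HE2) as [l [Hub Hlub]].
exists l. split.
2:{ intros b Hb. apply Hub. exists b; auto. }
intros P [eps Heps].
assert (Hb0 : exists b0, 0 <= b0 /\ l - eps < RInt f 0 b0).
{ destruct (Rlt_or_le (l - eps) (RInt f 0 0)) as [H|H].
  - exists 0; split; [lra|auto].
  - apply Classical_Prop.NNPP; intro Hn.
    assert (l <= l - eps). { apply Hlub. intros y [b [Hb ->]].
      destruct (Rle_or_lt (RInt f 0 b) (l - eps)); auto. exfalso; apply Hn. exists b; auto. }
    destruct eps; simpl in *; lra. }
destruct Hb0 as [b0 [Hb0 Hl]].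
apply (Filter_prod _ _ _ (fun a => a = 0) (fun b => b0 < b)).
- reflexivity.
- exists b0. auto.
- intros x y -> Hy. exists (RInt f 0 y). split.
  + apply (@RInt_correct R_CompleteNormedModule). apply (@ex_RInt_continuous R_CompleteNormedModule); auto.
  + apply Heps. assert (RInt f 0 b0 <= RInt f 0 y) by (apply F_mono; auto; lra).
    assert (RInt f 0 y <= l) by (apply Hub; exists y; split; auto; lra).
    change (Rabs (RInt f 0 y - l) < eps). apply Rabs_def1; destruct eps; simpl in *; lra.
Qed.

Definition kf (n : nat) (x t : R) : R := exp (- x * cosh t) * cosh t ^ n.

Lemma cosh_ge1 t : 1 <= cosh t.
Proof.
unfold cosh. pose proof (exp_ineq1_le t). pose proof (exp_ineq1_le (-t)). lra.
Qed.

Lemma cosh_ge_exp t : exp t / 2 <= cosh t.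
Proof. unfold cosh. pose proof (exp_pos (-t)). lra. Qed.

Lemma kf_cont n x t : continuous (kf n x) t.
Proof.
apply (@ex_derive_continuous R_AbsRing R_NormedModule). unfold kf, cosh. auto_derive. auto.
Qed.

Lemma kf_pos n x t : 0 < kf n x t.
Proof.
unfold kf. apply Rmult_lt_0_compat. apply exp_pos. apply pow_lt.
pose proof (cosh_ge1 t); lra.
Qed.

Lemma exp_ge_pow4 y : 0 <= y -> (y/4)^4 <= exp y.
Proof.
intro Hy.
replace (exp y) with (exp (y/4) ^ 4).
2:{ simpl. rewrite Rmult_1_r, <- !exp_plus. f_equal. lra. }
apply pow_incr. split. lra. pose proof (exp_ineq1_le (y/4)). lra.
Qed.

Lemma kf_bound n x t : (n <= 3)%nat -> 0 < x ->
  kf n x t <= 512 / x^4 * exp (- t).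
Proof.
intros Hn Hx. unfold kf.
set (c := cosh t).
assert (Hc1 : 1 <= c) by apply cosh_ge1.
assert (Hce : exp t / 2 <= c) by apply cosh_ge_exp.
assert (Hcn : c ^ n <= c ^ 3).
{ apply Rle_pow; auto. }
assert (Hxc : 0 <= x * c) by nra.
pose proof (exp_ge_pow4 _ Hxc) as HE.
rewrite exp_Ropp. rewrite Ropp_mult_distr_l_reverse, exp_Ropp.
set (E := exp (x * c)) in *. set (T := exp t) in *.
assert (HT : 0 < T) by apply exp_pos.
assert (HE0 : 0 < E) by apply exp_pos.
assert (Hc3 : 0 < c^3) by (apply pow_lt; lra).
assert (/ E * c ^ n <= / E * c^3) by (apply Rmult_le_compat_l; [left; apply Rinv_0_lt_compat; auto| auto]).
apply Rle_trans with (/ E * c^3); auto.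
assert (Hx4 : 0 < x^4) by (apply pow_lt; lra).
apply (Rmult_le_reg_r (E * x^4 * T)). { apply Rmult_lt_0_compat; [apply Rmult_lt_0_compat|]; lra. }
replace (/ E * c ^ 3 * (E * x ^ 4 * T)) with (c^3 * x^4 * T) by (field; lra).
replace (512 / x ^ 4 * / T * (E * x ^ 4 * T)) with (512 * E) by (field; lra).
assert (c^3 * x^4 * T <= c^3 * x^4 * (2*c)) by (apply Rmult_le_compat_l; [apply Rmult_le_pos; lra | lra]).
assert ((x * c / 4) ^ 4 = x^4 * c^4 / 256) by field.
assert (c^3 * x^4 * (2*c) = 2 * (x^4 * c^4)) by ring.
lra.
Qed.

Lemma RInt_exp_bound (C b : R) : 0 <= C -> 0 <= b -> RInt (fun t => C * exp (- t)) 0 b <= C.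
Proof.
intros HC Hb.
assert (H : is_RInt (fun t => C * exp (- t)) 0 b ((fun t => - C * exp (-t)) b - (fun t => - C * exp (-t)) 0)).
{ apply (is_RInt_derive (fun t => - C * exp (-t))).
  - intros y _. auto_derive; auto. ring.
  - intros y _. apply (@ex_derive_continuous R_AbsRing R_NormedModule). auto_derive. auto. }
rewrite (is_RInt_unique _ _ _ _ H). simpl. rewrite Ropp_0, exp_0.
pose proof (exp_pos (-b)). nra.
Qed.

Definition K (n : nat) (x : R) : R := RInt_gen (kf n x) (at_point 0) (Rbar_locally p_infty).

Lemma K_is n x : (n <= 3)%nat -> 0 < x ->
  is_RInt_gen (kf n x) (at_point 0) (Rbar_locally p_infty) (K n x) /\
  forall b, 0 <= b -> RInt (kf n x) 0 b <= K n x.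
Proof.
intros Hn Hx.
assert (HC : 0 <= 512 / x^4) by (apply Rlt_le, Rdiv_lt_0_compat; [lra | apply pow_lt; lra]).
destruct (mono_lim (kf n x) (512 / x^4)) as [l [Hl Hb]].
- apply kf_cont.
- intros; left; apply kf_pos.
- intros b Hb. eapply Rle_trans. 2: apply (RInt_exp_bound _ b HC Hb).
  apply RInt_le; auto.
  + apply (@ex_RInt_continuous R_CompleteNormedModule). intros; apply kf_cont.
  + apply (@ex_RInt_continuous R_CompleteNormedModule). intros.
    apply (@ex_derive_continuous R_AbsRing R_NormedModule). auto_derive; auto.
  + intros; apply kf_bound; auto.
- assert (K n x = l).
  { unfold K. apply is_RInt_gen_unique. exact Hl. }
  rewrite H. auto.
Qed.

Lemma K_pos n x : (n <= 3)%nat -> 0 < x -> 0 < K n x.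
Proof.
intros Hn Hx. destruct (K_is n x Hn Hx) as [_ H].
eapply Rlt_le_trans. 2: apply (H 1); lra.
apply RInt_gt_0; try lra. intros; apply kf_pos. intros; apply kf_cont.
Qed.

Lemma fp_pos (P : R -> R -> Prop) : (forall a b, a = 0 -> 0 < b -> P a b) ->
  filter_prod (at_point 0) (Rbar_locally p_infty) (fun ab : R * R => P (fst ab) (snd ab)).
Proof.
intros H. apply (Filter_prod _ _ _ (fun a => a = 0) (fun b => 0 < b)).
- reflexivity.
- exists 0. auto.
- intros a b Ha Hb. simpl. auto.
Qed.

Lemma K_mono x y : 0 < x -> x <= y -> K 1 y <= exp (x - y) * K 1 x.
Proof.
intros Hx Hxy.
destruct (K_is 1 y) as [Hy _]; try lia; try lra.
destruct (K_is 1 x) as [Hx' _]; try lia; try lra.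
pose proof (is_RInt_gen_scal _ (exp (x - y)) _ Hx') as Hs.
eapply Rle_trans. apply Rle_abs.
refine (RInt_gen_norm (kf 1 y) _ _ _ _ _ Hy Hs).
- apply (fp_pos (fun a b => a <= b)). intros; lra.
- apply (fp_pos (fun a b => forall t, a <= t <= b -> norm (kf 1 y t) <= scal (exp (x - y)) (kf 1 x t))).
  intros a b _ _ t _.
  unfold norm, scal; simpl. unfold abs, mult; simpl.
  rewrite Rabs_pos_eq by (left; apply kf_pos).
  unfold kf. rewrite <- Rmult_assoc, <- exp_plus.
  apply Rmult_le_compat_r. left; apply pow_lt; pose proof (cosh_ge1 t); lra.
  destruct (Req_dec (- y * cosh t) (x - y + - x * cosh t)) as [E|E]; [rewrite E; lra|].
  left; apply exp_increasing. pose proof (cosh_ge1 t). nra.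
Qed.

Lemma taylor2 u : 0 <= exp u - 1 - u <= u^2 * exp (Rabs u).
Proof.
pose proof (exp_ineq1_le u) as H1.
pose proof (exp_ineq1_le (-u)) as H2.
assert (H3 : exp u - 1 <= u * exp u).
{ pose proof (exp_pos u). rewrite exp_Ropp in H2.
  assert (exp u * / exp u = 1) by (field; lra).
  nra. }
split; [lra|].
destruct (Rle_or_lt 0 u) as [Hu|Hu].
- rewrite Rabs_pos_eq by lra. nra.
- rewrite Rabs_left by lra. pose proof (exp_ineq1_le (-u)). nra.
Qed.

Lemma rem_bound x h t : 0 < x -> Rabs h <= x / 2 ->
  Rabs (kf 1 (x + h) t - kf 1 x t + h * kf 2 x t) <= h^2 * kf 3 (x/2) t.
Proof.
intros Hx Hh. unfold kf. set (c := cosh t).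
assert (Hc : 1 <= c) by apply cosh_ge1.
assert (E : exp (- (x + h) * c) * c ^ 1 - exp (- x * c) * c ^ 1 + h * (exp (- x * c) * c ^ 2)
  = c * exp (- x * c) * (exp (- h * c) - 1 - (- h * c))).
{ replace (- (x + h) * c) with (- x * c + - h * c) by ring. rewrite exp_plus. ring. }
rewrite E. destruct (taylor2 (- h * c)) as [T1 T2].
rewrite Rabs_pos_eq.
2:{ apply Rmult_le_pos; auto. apply Rmult_le_pos. lra. left; apply exp_pos. }
assert (Ha : Rabs (- h * c) <= x / 2 * c).
{ rewrite Rabs_mult, Rabs_Ropp, (Rabs_pos_eq c) by lra. apply Rmult_le_compat_r; lra. }
assert (Hb : exp (Rabs (- h * c)) <= exp (x / 2 * c)).
{ destruct Ha as [Ha|Ha]. left; apply exp_increasing; auto. rewrite Ha; lra. }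
assert (Hp : 0 <= c * exp (- x * c)) by (apply Rmult_le_pos; [lra | left; apply exp_pos]).
apply Rle_trans with (c * exp (- x * c) * ((- h * c)^2 * exp (x / 2 * c))).
{ apply Rmult_le_compat_l; auto. eapply Rle_trans; [apply T2|].
  apply Rmult_le_compat_l. apply pow2_ge_0. auto. }
replace (- (x / 2) * c) with (- x * c + x / 2 * c) by field.
rewrite exp_plus. right; ring.
Qed.

Lemma rem_K x h : 0 < x -> Rabs h <= x / 2 ->
  Rabs (K 1 (x + h) - K 1 x + h * K 2 x) <= h^2 * K 3 (x/2).
Proof.
intros Hx Hh.
assert (Hxh : 0 < x + h) by (apply Rabs_le_between in Hh; lra).
destruct (K_is 1 (x + h)) as [I1 _]; try lia; try lra.
destruct (K_is 1 x) as [I2 _]; try lia; try lra.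
destruct (K_is 2 x) as [I3 _]; try lia; try lra.
destruct (K_is 3 (x/2)) as [I4 _]; try lia; try lra.
pose proof (is_RInt_gen_plus _ _ _ _ (is_RInt_gen_minus _ _ _ _ I1 I2) (is_RInt_gen_scal _ h _ I3)) as J.
pose proof (is_RInt_gen_scal _ (h^2) _ I4) as J2.
refine (RInt_gen_norm _ _ _ _ _ _ J J2).
- apply (fp_pos (fun a b => a <= b)). intros; lra.
- apply (fp_pos (fun a b => forall t, a <= t <= b -> _)).
  intros a b _ _ t _. apply rem_bound; auto.
Qed.

Lemma K_deriv x : 0 < x -> is_derive (K 1) x (- K 2 x).
Proof.
intros Hx. apply is_derive_Reals.
intros eps Heps.
assert (HK3 : 0 < K 3 (x/2)) by (apply K_pos; [lia | lra]).
assert (Hd : 0 < Rmin (x/2) (eps / (K 3 (x/2)))).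
{ apply Rmin_pos. lra. apply Rdiv_lt_0_compat; lra. }
exists (mkposreal _ Hd). intros h Hh0 Hh. simpl in Hh.
assert (Hh1 : Rabs h <= x / 2) by (pose proof (Rmin_l (x/2) (eps / K 3 (x/2))); lra).
assert (Hh2 : Rabs h < eps / K 3 (x/2)) by (pose proof (Rmin_r (x/2) (eps / K 3 (x/2))); lra).
pose proof (rem_K x h Hx Hh1) as R.
replace ((K 1 (x + h) - K 1 x) / h - - K 2 x) with ((K 1 (x + h) - K 1 x + h * K 2 x) / h) by (field; auto).
unfold Rdiv. rewrite Rabs_mult, Rabs_inv.
assert (Hah : 0 < Rabs h) by (apply Rabs_pos_lt; auto).
apply Rle_lt_trans with (h^2 * K 3 (x/2) * / Rabs h).
{ apply Rmult_le_compat_r; [left; apply Rinv_0_lt_compat; auto | auto]. }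
replace (h ^ 2) with (Rabs h * Rabs h) by (rewrite <- Rabs_mult, Rabs_pos_eq; [ring | nra]).
replace (Rabs h * Rabs h * K 3 (x / 2) * / Rabs h) with (Rabs h * K 3 (x/2)) by (field; lra).
apply (Rmult_lt_compat_r (K 3 (x/2))) in Hh2; auto.
replace (eps / K 3 (x / 2) * K 3 (x / 2)) with eps in Hh2 by (field; lra). lra.
Qed.

Definition bI (k : nat) : R := / (INR (fact k) * INR (fact (S k))).

Lemma bI_pos k : 0 < bI k.
Proof.
unfold bI. apply Rinv_0_lt_compat. apply Rmult_lt_0_compat; apply lt_0_INR, lt_O_fact.
Qed.

Lemma bI_rec k : bI k = INR (S k) * INR (S (S k)) * bI (S k).
Proof.
unfold bI. rewrite (fact_simpl (S k)), (fact_simpl k).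
rewrite !mult_INR.
pose proof (lt_0_INR _ (lt_O_fact k)). pose proof (lt_0_INR _ (lt_O_fact (S k))).
rewrite fact_simpl in H0. rewrite mult_INR in H0.
assert (0 < INR (S k)) by (apply lt_0_INR; lia).
assert (0 < INR (S (S k))) by (apply lt_0_INR; lia).
field. repeat split; lra.
Qed.

Lemma bI_radius : CV_radius bI = p_infty.
Proof.
apply CV_radius_infinite_DAlembert.
- intro n. pose proof (bI_pos n). lra.
- apply (is_lim_seq_le_le (fun _ => 0) _ (fun n => / INR (S n))).
  + intro n. rewrite (bI_rec n).
    pose proof (bI_pos (S n)).
    assert (1 <= INR (S n)) by (apply (le_INR 1); lia).
    assert (1 <= INR (S (S n))) by (apply (le_INR 1); lia).
    replace (bI (S n) / (INR (S n) * INR (S (S n)) * bI (S n))) with (/ (INR (S n) * INR (S (S n)))) by (field; repeat split; lra).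
    rewrite Rabs_pos_eq.
    2:{ left; apply Rinv_0_lt_compat; nra. }
    split. left; apply Rinv_0_lt_compat; nra.
    apply Rinv_le_contravar. lra. nra.
  + apply is_lim_seq_const.
  + replace (Finite 0) with (Rbar_inv p_infty) by reflexivity.
    apply is_lim_seq_inv. 2: discriminate.
    apply (is_lim_seq_incr_1 (fun n => INR n)). apply is_lim_seq_INR.
Qed.

Lemma bI_ex z : ex_series (fun k => bI k * z ^ k).
Proof.
assert (H : ex_pseries bI z). { apply CV_radius_inside. rewrite bI_radius. exact I. }
unfold ex_pseries in H. eapply ex_series_ext. 2: exact H.
intro n. simpl. rewrite pow_n_pow. unfold scal; simpl; unfold mult; simpl. ring.
Qed.

Definition P (z : R) := PSeries bI z.

Lemma I1_eq x : BesselI1 x = x / 2 * P ((x / 2) ^ 2).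
Proof.
unfold BesselI1, P, PSeries. rewrite <- Series_scal_l. apply Series_ext. intro k.
unfold bI. rewrite <- pow_mult. rewrite pow_add. simpl pow at 2.
assert (0 < INR (fact k) * INR (fact (S k))) by (apply Rmult_lt_0_compat; apply lt_0_INR, lt_O_fact).
rewrite Rmult_1_r; unfold Rdiv; ring.
Qed.

Lemma P_ge1 z : 0 <= z -> 1 <= P z.
Proof.
intro Hz. unfold P, PSeries. rewrite Series_incr_1 by apply bI_ex.
assert (bI 0 * z ^ 0 = 1) by (unfold bI; simpl; field).
rewrite H.
assert (0 <= Series (fun k => bI (S k) * z ^ S k)).
{ assert (H0: Series (fun _:nat => 0) = 0).
  { transitivity (0 * Series (fun _:nat => 0)). 2: ring. rewrite <- Series_scal_l. apply Series_ext; intro; ring. }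
  rewrite <- H0. apply Series_le.
  intro n. split. lra. apply Rmult_le_pos. left; apply bI_pos. apply pow_le; auto.
  apply (ex_series_incr_1 (fun k => bI k * z ^ k)). apply bI_ex. }
lra.
Qed.

Definition dP (z : R) := PSeries (PS_derive bI) z.

Lemma P_deriv z : is_derive P z (dP z).
Proof. apply is_derive_PSeries. rewrite bI_radius. exact I. Qed.

Lemma dP_ex z : ex_series (fun k => PS_derive bI k * z ^ k).
Proof.
assert (H : ex_pseries (PS_derive bI) z). { apply ex_pseries_derive. rewrite bI_radius. exact I. }
unfold ex_pseries in H. eapply ex_series_ext. 2: exact H.
intro n. simpl. rewrite pow_n_pow. unfold scal; simpl; unfold mult; simpl. ring.
Qed.

Lemma dP_le x : 0 <= x -> x / 2 * dP ((x/2)^2) <= P ((x/2)^2).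
Proof.
intro Hx. set (z := (x/2)^2).
assert (Hz : 0 <= z) by (apply pow2_ge_0).
unfold dP, PSeries. rewrite <- Series_scal_l.
assert (HS : Series (fun k => bI k * z ^ k + bI (S k) * z ^ S k) <= 2 * P z).
{ rewrite Series_plus.
  2: apply bI_ex.
  2: apply (ex_series_incr_1 (fun k => bI k * z ^ k)); apply bI_ex.
  pose proof (Series_incr_1 (fun k => bI k * z ^ k) (bI_ex z)) as E1.
  assert (bI 0 * z ^ 0 = 1) by (unfold bI; simpl; field).
  unfold P, PSeries. lra. }
assert (Hle : Series (fun k => x * (PS_derive bI k * z ^ k)) <= Series (fun k => bI k * z ^ k + bI (S k) * z ^ S k)).
{ apply Series_le.
  - intro k. unfold PS_derive. rewrite (bI_rec k).
    pose proof (bI_pos (S k)) as Hb. pose proof (pow_le z k Hz) as Hzk.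
    set (n1 := INR (S k)). assert (Hn1 : 1 <= n1) by (apply (le_INR 1); lia).
    replace (INR (S (S k))) with (n1 + 1) by (unfold n1; rewrite (S_INR (S k)); ring).
    set (w := bI (S k) * z ^ k). assert (0 <= w) by (apply Rmult_le_pos; lra).
    replace (x * (n1 * bI (S k) * z ^ k)) with (w * (x * n1)) by (unfold w; ring).
    replace (n1 * (n1 + 1) * bI (S k) * z ^ k + bI (S k) * z ^ S k) with (w * (n1 * (n1 + 1) + z)) by (unfold w; simpl; ring).
    split. apply Rmult_le_pos; nra.
    apply Rmult_le_compat_l; auto. unfold z. pose proof (pow2_ge_0 (x/2 - n1)). assert ((x/2 - n1)^2 = (x/2)^2 - x*n1 + n1*n1) by field. nra.
  - apply (@ex_series_plus R_AbsRing R_NormedModule (fun k => bI k * z ^ k) (fun k => bI (S k) * z ^ S k)). apply bI_ex.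
    apply (ex_series_incr_1 (fun k => bI k * z ^ k)); apply bI_ex. }
rewrite Series_scal_l. rewrite Series_scal_l in Hle. lra.
Qed.

Lemma Pc_deriv x : is_derive (fun x => P ((x/2)^2)) x (x / 2 * dP ((x/2)^2)).
Proof.
apply (is_derive_comp P (fun x => (x/2)^2) x (dP ((x/2)^2)) (x/2)).
- apply P_deriv.
- auto_derive; auto. field.
Qed.

Lemma I1_ex_derive x : ex_derive BesselI1 x.
Proof.
apply (ex_derive_ext (fun x => x / 2 * P ((x/2)^2))).
- intro; symmetry; apply I1_eq.
- apply ex_derive_mult. auto_derive; auto. eexists; apply Pc_deriv.
Qed.

Definition hI (x : R) := exp (- x) * P ((x/2)^2).

Lemma hI_deriv x : is_derive hI x (exp (- x) * (x / 2 * dP ((x/2)^2) - P ((x/2)^2))).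
Proof.
unfold hI.
replace (exp (- x) * (x / 2 * dP ((x / 2) ^ 2) - P ((x / 2) ^ 2))) with
  ((-1 * exp (- x)) * P ((x/2)^2) + exp (- x) * (x / 2 * dP ((x/2)^2))) by ring.
apply (is_derive_mult (fun x => exp (- x)) (fun x => P ((x/2)^2))).
- auto_derive; auto; try ring.
- apply Pc_deriv.
- intros; apply Rmult_comm.
Qed.

Lemma hI_mono x y : 0 <= x <= y -> hI y <= hI x.
Proof.
intros Hxy.
destruct (MVT_gen hI x y (fun t => exp (- t) * (t / 2 * dP ((t/2)^2) - P ((t/2)^2)))) as [c [Hc E]].
- intros t _. apply hI_deriv.
- intros t _. apply derivable_continuous_pt. eexists. apply is_derive_Reals. apply hI_deriv.
- rewrite Rmin_left, Rmax_right in Hc by lra.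
  assert (0 <= c) by lra.
  pose proof (dP_le c H). pose proof (exp_pos (- c)).
  assert (exp (- c) * (c / 2 * dP ((c / 2) ^ 2) - P ((c / 2) ^ 2)) <= 0) by nra.
  nra.
Qed.

Definition gg (y : R) := BesselI1 y * BesselK1 y.

Lemma G_diag y : G y y = gg y.
Proof. unfold G, gg. rewrite Rmin_left, Rmax_left by lra. reflexivity. Qed.

Lemma K1_eq x : 0 < x -> BesselK1 x = K 1 x.
Proof.
intro Hx. unfold BesselK1, K. symmetry. apply RInt_gen_ext_eq.
- intro t. unfold kf. simpl. rewrite Rmult_1_r. reflexivity.
- exists (K 1 x). apply K_is; auto; lia.
Qed.

Lemma I1_pos x : 0 < x -> x / 2 <= BesselI1 x.
Proof.
intro Hx. rewrite I1_eq. pose proof (P_ge1 ((x/2)^2) (pow2_ge_0 _)). nra.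
Qed.

Lemma gg_pos y : 0 < y -> 0 < gg y.
Proof.
intro Hy. unfold gg. rewrite K1_eq by auto. pose proof (I1_pos y Hy).
pose proof (K_pos 1 y ltac:(lia) Hy). nra.
Qed.

Lemma gg_ex_derive y : 0 < y -> ex_derive gg y.
Proof.
intro Hy. unfold gg. apply ex_derive_mult. apply I1_ex_derive.
apply (ex_derive_ext_loc (K 1)).
- assert (Hp : 0 < y) by lra. exists (mkposreal y Hp). intros t Ht.
  unfold ball in Ht; simpl in Ht; unfold AbsRing_ball, abs, minus, plus, opp in Ht; simpl in Ht.
  symmetry. apply K1_eq. apply Rabs_def2 in Ht. lra.
- eexists. apply K_deriv. auto.
Qed.

Lemma gg_ratio x y : 0 < x -> x <= y -> gg y <= y / x * gg x.
Proof.
intros Hx Hxy. unfold gg. rewrite !K1_eq by lra.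
pose proof (K_mono x y Hx Hxy) as HK.
pose proof (K_pos 1 y ltac:(lia) ltac:(lra)).
pose proof (K_pos 1 x ltac:(lia) ltac:(lra)).
assert (HI : BesselI1 y <= y / x * exp (y - x) * BesselI1 x).
{ rewrite !I1_eq. pose proof (hI_mono x y ltac:(lra)) as Hh. unfold hI in Hh.
  rewrite exp_Ropp, exp_Ropp in Hh.
  pose proof (exp_pos x). pose proof (exp_pos y).
  replace (exp (y - x)) with (exp y / exp x) by (unfold Rminus; rewrite exp_plus, exp_Ropp; field; lra).
  pose proof (P_ge1 ((y/2)^2) (pow2_ge_0 _)). pose proof (P_ge1 ((x/2)^2) (pow2_ge_0 _)).
  apply (Rmult_le_reg_r (/ exp y)). apply Rinv_0_lt_compat; lra.
  replace (y / x * (exp y / exp x) * (x / 2 * P ((x / 2) ^ 2)) * / exp y)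
    with (y / 2 * (/ exp x * P ((x / 2) ^ 2))) by (field; lra).
  replace (y / 2 * P ((y / 2) ^ 2) * / exp y) with (y / 2 * (/ exp y * P ((y / 2) ^ 2))) by ring.
  apply Rmult_le_compat_l; lra. }
pose proof (I1_pos y ltac:(lra)). pose proof (I1_pos x ltac:(lra)).
apply Rle_trans with ((y / x * exp (y - x) * BesselI1 x) * (exp (x - y) * K 1 x)).
{ apply Rmult_le_compat; lra. }
replace (exp (x - y)) with (/ exp (y - x)) by (rewrite <- exp_Ropp; f_equal; ring).
pose proof (exp_pos (y - x)). right; field. lra.
Qed.

Definition ff (y : R) := gg y / y ^ 2.

Lemma ff_decr x y : 0 < x -> x < y -> ff y < ff x.
Proof.
intros Hx Hxy. unfold ff.
pose proof (gg_ratio x y Hx ltac:(lra)). pose proof (gg_pos x Hx). pose proof (gg_pos y ltac:(lra)).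
apply Rle_lt_trans with (y / x * gg x / y ^ 2).
{ unfold Rdiv. apply Rmult_le_compat_r. left; apply Rinv_0_lt_compat, pow_lt; lra. lra. }
replace (y / x * gg x / y ^ 2) with (gg x / (x * y)) by (field; lra).
unfold Rdiv. apply Rmult_lt_compat_l. lra. assert (0 < x*y) by nra. assert (0 < x*x) by nra. apply Rinv_lt_contravar; simpl; rewrite ?Rmult_1_r; nra.
Qed.

Lemma ff_big B : 0 < B -> forall x0, 0 < x0 -> exists x, 0 < x <= x0 /\ B <= ff x.
Proof.
intros HB x0 Hx0.
set (k := K 1 1). assert (Hk : 0 < k) by (apply K_pos; lia || lra).
set (x := Rmin (Rmin x0 1) (k / (2 * B))).
assert (Hxpos : 0 < x). { unfold x. apply Rmin_pos. apply Rmin_pos; lra. apply Rdiv_lt_0_compat; lra. }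
assert (Hx1 : x <= Rmin x0 1) by apply Rmin_l.
assert (Hx2 : x <= k / (2 * B)) by apply Rmin_r.
pose proof (Rmin_l x0 1). pose proof (Rmin_r x0 1).
exists x. split. lra.
unfold ff, gg. rewrite K1_eq by lra.
pose proof (K_mono x 1 Hxpos ltac:(lra)) as HK. fold k in HK.
assert (Hex : exp (x - 1) <= 1). { rewrite <- exp_0 at 2. assert (Hq : x - 1 <= 0) by lra. destruct Hq as [Hq|Hq]; [left; apply exp_increasing; auto | rewrite Hq; lra]. }
pose proof (K_pos 1 x ltac:(lia) Hxpos).
assert (k <= K 1 x) by (pose proof (exp_pos (x-1)); nra).
pose proof (I1_pos x Hxpos).
assert (x / 2 * k <= BesselI1 x * K 1 x) by (apply Rmult_le_compat; lra).
apply Rle_trans with (x / 2 * k / x ^ 2).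
2:{ unfold Rdiv. apply Rmult_le_compat_r. left; apply Rinv_0_lt_compat, pow_lt; lra. lra. }
replace (x / 2 * k / x ^ 2) with (k / (2 * x)) by (field; lra).
apply (Rmult_le_reg_r (2 * x)). lra.
replace (k / (2 * x) * (2 * x)) with k by (field; lra).
apply (Rmult_le_compat_l B) in Hx2; [|lra].
replace (B * (k / (2 * B))) with (k / 2) in Hx2 by (field; lra). lra.
Qed.

Lemma rbar_between (a b : Rbar) (s u t : R) : Rbar_lt a s -> Rbar_lt s b -> Rbar_lt a u -> Rbar_lt u b ->
  Rmin s u <= t <= Rmax s u -> Rbar_lt a t /\ Rbar_lt t b.
Proof.
intros H1 H2 H3 H4 H5.
assert (Rmin s u = s \/ Rmin s u = u) by (unfold Rmin; destruct Rle_dec; auto).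
assert (Rmax s u = s \/ Rmax s u = u) by (unfold Rmax; destruct Rle_dec; auto).
destruct H as [E1|E1]; destruct H0 as [E2|E2]; rewrite E1, E2 in H5;
destruct a as [a| |]; destruct b as [b| |]; simpl in *; try contradiction; split; auto; try lra.
Qed.

Lemma char y M E : 0 < y -> 0 < M -> 0 < E ->
  (y = M * sqrt (G y y / E) <-> ff y = E / M^2).
Proof.
intros Hy HM HE. rewrite G_diag. unfold ff. pose proof (gg_pos y Hy) as Hg.
split.
- intro Hq. assert (Hs : sqrt (gg y / E) = y / M). { apply (Rmult_eq_reg_l M); [| lra]. rewrite <- Hq. field. lra. }
  assert (gg y / E = (y / M)^2).
  { rewrite <- Hs. rewrite pow2_sqrt. auto. apply Rlt_le, Rdiv_lt_0_compat; lra. }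
  apply (Rmult_eq_reg_r (y^2 / E)). 2: { apply Rgt_not_eq, Rdiv_lt_0_compat; [apply pow_lt|]; lra. }
  replace (gg y / y ^ 2 * (y ^ 2 / E)) with (gg y / E) by (field; lra). rewrite H. field; lra.
- intro Hf.
  assert (gg y / E = (y / M)^2).
  { apply (Rmult_eq_reg_r (E / y^2)). 2: { apply Rgt_not_eq, Rdiv_lt_0_compat; [|apply pow_lt]; lra. }
    replace (gg y / E * (E / y ^ 2)) with (gg y / y^2) by (field; lra). rewrite Hf. field; lra. }
  rewrite H, sqrt_pow2. field; lra. apply Rlt_le, Rdiv_lt_0_compat; lra.
Qed.

Lemma ff_cont z : 0 < z -> continuity_pt ff z.
Proof.
intro Hz.
destruct (gg_ex_derive z Hz) as [l Hl].
assert (ex_derive ff z).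
{ unfold ff. apply ex_derive_div. exists l; auto. auto_derive; auto. apply pow_nonzero; lra. }
destruct H as [l' Hl']. apply derivable_continuous_pt. exists l'. apply is_derive_Reals. auto.
Qed.

Lemma H_deriv0 (M : R) (q p : R -> R) t : 0 < q t ->
  is_derive q t (Derive (fun pp => Hpeak M pp (q t)) (p t)) ->
  is_derive p t (- Derive (fun qq => Hpeak M (p t) qq) (q t)) ->
  is_derive (fun s => Hpeak M (p s) (q s)) t 0.
Proof.
intros Hq Dq Dp.
set (Q := q t) in *. set (Pp := p t) in *.
assert (HgQ : ex_derive gg Q) by (apply gg_ex_derive; auto).
assert (E1 : Derive (fun pp => Hpeak M pp Q) Pp = Pp * gg Q).
{ apply is_derive_unique. unfold Hpeak. rewrite G_diag. auto_derive; auto. field. }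
set (DQ := / 2 * (- (2 * M^2) / Q^3) * gg Q + / 2 * (Pp^2 + M^2 / Q^2) * Derive gg Q).
assert (E2 : Derive (fun qq => Hpeak M Pp qq) Q = DQ).
{ apply is_derive_unique.
  apply (is_derive_ext (fun qq => / 2 * (Pp^2 + M^2 / qq^2) * gg qq)).
  { intro; unfold Hpeak; rewrite G_diag; reflexivity. }
  auto_derive. split; [apply Rmult_integral_contrapositive; split; nra | split; auto]. unfold DQ. change (fun x : R => gg x) with gg. field. lra. }
rewrite E1 in Dq. rewrite E2 in Dp.
apply (is_derive_ext (fun s => / 2 * (p s^2 + M^2 / q s^2) * gg (q s))).
{ intro; unfold Hpeak; rewrite G_diag; reflexivity. }
auto_derive.
- fold Q. repeat split; try (eexists; eassumption); auto. apply Rmult_integral_contrapositive; split; nra.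
- change (fun x : R => p x) with p. change (fun x : R => q x) with q. change (fun x : R => gg x) with gg.
  rewrite (is_derive_unique _ _ _ Dq), (is_derive_unique _ _ _ Dp). fold Q Pp. unfold DQ. field. lra.
Qed.

Theorem proposition5 (M : R) (a b : Rbar) (q p : R -> R) (t0 E : R) :
  0 < M ->
  Rbar_lt a t0 -> Rbar_lt t0 b ->
  (forall t : R, Rbar_lt a t -> Rbar_lt t b -> 0 < q t) ->
  (forall t : R, Rbar_lt a t -> Rbar_lt t b ->
     is_derive q t (Derive (fun pp => Hpeak M pp (q t)) (p t)) /\
     is_derive p t (- Derive (fun qq => Hpeak M (p t) qq) (q t))) ->
  E = (p t0 ^ 2 + M ^ 2 / q t0 ^ 2) * G (q t0) (q t0) ->
  0 < E ->
  exists qs : R,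
    (0 < qs /\ qs = M * sqrt (G qs qs / E)) /\
    (forall y : R, 0 < y -> y = M * sqrt (G y y / E) -> y = qs) /\
    (forall t : R, Rbar_lt a t -> Rbar_lt t b -> qs <= q t).
Proof.
intros HM Ha Hb Hqpos Hham HE HEpos.
set (c := E / M^2).
assert (Hc : 0 < c) by (apply Rdiv_lt_0_compat; [|apply pow_lt]; lra).
assert (Hcons : forall t : R, Rbar_lt a t -> Rbar_lt t b -> Hpeak M (p t) (q t) = Hpeak M (p t0) (q t0)).
{ intros t Hat Htb.
  destruct (MVT_gen (fun s => Hpeak M (p s) (q s)) t0 t (fun _ => 0)) as [w [_ Hw]].
  - intros s Hs. destruct (rbar_between a b t0 t s Ha Hb Hat Htb ltac:(lra)) as [H1 H2].
    destruct (Hham s H1 H2). apply H_deriv0; auto.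
  - intros s Hs. destruct (rbar_between a b t0 t s Ha Hb Hat Htb Hs) as [H1 H2].
    destruct (Hham s H1 H2). apply derivable_continuous_pt. exists 0.
    apply is_derive_Reals. apply H_deriv0; auto.
  - lra. }
assert (Hbound : forall t : R, Rbar_lt a t -> Rbar_lt t b -> ff (q t) <= c).
{ intros t Hat Htb. pose proof (Hcons t Hat Htb) as Ht. unfold Hpeak in Ht.
  rewrite !G_diag in Ht. rewrite G_diag in HE.
  pose proof (Hqpos t Hat Htb) as Hq. pose proof (gg_pos _ Hq) as Hg.
  assert (HE' : E = (p t ^ 2 + M ^ 2 / q t ^ 2) * gg (q t)) by lra.
  unfold ff, c. rewrite HE'.
  assert (0 < q t ^ 2) by (apply pow_lt; lra).
  assert (0 < M ^ 2) by (apply pow_lt; lra).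
  apply (Rmult_le_reg_r (M^2)); auto.
  replace ((p t ^ 2 + M ^ 2 / q t ^ 2) * gg (q t) / M ^ 2 * M ^ 2)
    with (p t ^ 2 * gg (q t) + M ^ 2 * (gg (q t) / q t ^ 2)) by (field; lra).
  assert (0 <= p t ^ 2 * gg (q t)) by (apply Rmult_le_pos; [apply pow2_ge_0 | lra]).
  unfold Rdiv. lra. }
set (q0 := q t0).
assert (Hq0 : 0 < q0) by (apply Hqpos; auto).
assert (Hf0 : ff q0 <= c) by (apply Hbound; auto).
assert (Hex : exists qs, 0 < qs /\ ff qs = c).
{ destruct (ff_big (c + 1) ltac:(lra) (q0 / 2) ltac:(lra)) as [x1 [Hx1 Hfx1]].
  destruct Hf0 as [Hlt|Heq].
  - destruct (Ranalysis5.IVT_interv (fun z => c - ff z) x1 q0) as [z [Hz Fz]].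
    + intros z Hz. apply continuity_pt_minus. apply continuity_pt_const. intros u v; reflexivity.
      apply ff_cont. lra.
    + lra.
    + lra.
    + lra.
    + exists z. split. lra. lra.
  - exists q0. auto. }
destruct Hex as [qs [Hqs Hfqs]].
exists qs. split; [split|split].
- auto.
- apply char; auto.
- intros y Hy Hyq. apply char in Hyq; auto.
  destruct (Rtotal_order y qs) as [H|[H|H]]; auto.
  + pose proof (ff_decr y qs Hy H). fold c in Hyq. lra.
  + pose proof (ff_decr qs y Hqs H). fold c in Hyq. lra.
- intros t Hat Htb. pose proof (Hbound t Hat Htb).
  destruct (Rle_or_lt qs (q t)) as [H'|H']; auto.
  pose proof (ff_decr (q t) qs (Hqpos t Hat Htb) H'). lra.
Qed.
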